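(* Let $G$ be a graph and let $c_1,\ldots,c_m$ be $m$ proper colorings of $G$. Then there is a vertex of $G$ that, for each $i\in[m]$, is adjacent to vertices of at least $\left\lfloor\frac{1}{2m}\operatorname{ind}(\operatorname{Hom}(K_2,G))\right\rfloor+1$ distinct colors in the coloring $c_i$.
   Context: For a graph $G=(V,E)$, $\operatorname{Hom}(K_2,G)$ is the poset whose elements are the pairs $(A,B)$ of non-empty disjoint subsets of $V$ such that every vertex of $A$ is adjacent to every vertex of $B$, ordered by $(A,B)\preceq(A',B')$ iff $A\subseteq A'$ and $B\subseteq B'$; it is identified with its order complex (vertices are the poset elements, simplices are the chains), which carries the free $\mathbb{Z}_2$-action $(A,B)\mapsto(B,A)$. For a free simplicial $\mathbb{Z}_2$-complex $\mathsf{K}$, its $\mathbb{Z}_2$-index $\operatorname{ind}(\mathsf{K})$ is the minimal $d$ such that there is a continuous map from (the geometric realization of) $\mathsf{K}$ to the sphere $\mathcal{S}^d$ commuting with the $\mathbb{Z}_2$-actions (the action on $\mathcal{S}^d$ being the antipodal map). *)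

(* Defs.v *)
From HB Require Import structures.
From mathcomp Require Import all_boot all_order all_algebra.
From mathcomp Require Import boolp classical_sets reals topology normedtype function_spaces.
Set Implicit Arguments. Unset Strict Implicit. Unset Printing Implicit Defensive.
Import Order.TTheory GRing.Theory Num.Theory.
Import numFieldNormedType.Exports.
Local Open Scope ring_scope.
Local Open Scope classical_set_scope.

Definition simple_graph (T : finType) (e : rel T) :=
  symmetric e /\ irreflexive e.

Definition proper_coloring (T : finType) (e : rel T) (c : T -> nat) :=
  forall u v, e u v -> c u != c v.

Definition nb_neighbor_colors (T : finType) (e : rel T) (c : T -> nat) (v : T) : nat :=
  size (undup [seq c u | u <- enum [pred u | e v u]]).

(** Candidate vertices of Hom(K_2,G): pairs (A,B) of subsets of V. *)
Notation HomK2_cand T := ({set T} * {set T})%type.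

Definition is_HomK2 (T : finType) (e : rel T) (p : HomK2_cand T) : bool :=
  [&& p.1 != finset.set0, p.2 != finset.set0, [disjoint p.1 & p.2]
    & [forall a in p.1, forall b in p.2, e a b]].

Definition HomK2_le (T : finType) (p q : HomK2_cand T) : bool :=
  (p.1 \subset q.1) && (p.2 \subset q.2).

Definition HomK2_swap (T : finType) (p : HomK2_cand T) : HomK2_cand T :=
  (p.2, p.1).

(** Geometric realization of the order complex of Hom(K_2,G), embedded in
    R^(HomK2_cand T) with the product (= Euclidean) topology: points are convex combinations (barycentric coordinates)
    of poset elements whose support is a chain. *)
Notation RHomK2 R T := {ptws HomK2_cand T -> R}.

Definition HomK2_realization (R : realType) (T : finType) (e : rel T)
  : set (RHomK2 R T) :=
  [set x | (forall p, 0 <= x p)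
         /\ (\sum_(p : HomK2_cand T) x p = 1)
         /\ (forall p, x p != 0 -> is_HomK2 e p)
         /\ (forall p q, x p != 0 -> x q != 0 -> HomK2_le p q || HomK2_le q p)].

Definition HomK2_act (R : realType) (T : finType) (x : RHomK2 R T)
  : RHomK2 R T := fun p => x (HomK2_swap p).

Definition unit_sphere (R : realType) (n : nat) : set 'rV[R]_n :=
  [set y | \sum_(i < n) (y ord0 i) ^+ 2 = 1].

Definition HomK2_Z2map_to (R : realType) (T : finType) (e : rel T) (n : nat) :=
  exists f : RHomK2 R T -> 'rV[R]_n,
    {within @HomK2_realization R T e, continuous f}
    /\ (forall x, @HomK2_realization R T e x -> @unit_sphere R n (f x))
    /\ (forall x, @HomK2_realization R T e x -> f (HomK2_act x) = - f x).

(** Z_2-index of Hom(K_2,G): the minimal d such that there is a Z_2-map to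
    S^d; we quantify over n = d+1 (with S^(-1) = the empty sphere of R^0, so
    the empty complex has index -1). Default value 0 in the (impossible)
    case where no such map exists. *)
Definition Z2index_HomK2 (R : realType) (T : finType) (e : rel T) : int :=
  match pselect (exists n, @HomK2_Z2map_to R T e n) with
  | left ex => (ex_minn (P := fun n => `[< @HomK2_Z2map_to R T e n >])
                  (let: ex_intro n h := ex in ex_intro _ n (asboolT h)))%:Z - 1
  | right _ => 0
  end.

(* Main.v *)
Require Import Defs.
From HB Require Import structures.
From mathcomp Require Import all_boot all_order all_algebra.
From mathcomp Require Import boolp classical_sets reals topology normedtype function_spaces.
From mathcomp Require Import realfun zify lra.
Import Order.TTheory GRing.Theory Num.Theory.
Import numFieldNormedType.Exports.
Set Implicit Arguments. Unset Strict Implicit. Unset Printing Implicit Defensive.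

Lemma sum_lt_helper (I : finType) (f g : I -> nat) (i0 : I) :
  (forall i, f i <= g i) -> f i0 < g i0 -> \sum_i f i < \sum_i g i.
Proof.
move=> H H0; rewrite (bigD1 i0) //= [X in _ < X](bigD1 i0) //=.
have : \sum_(i | i != i0) f i <= \sum_(i | i != i0) g i by apply: leq_sum.
lia.
Qed.

Lemma sum_eq_helper (I : finType) (f g : I -> nat) :
  (forall i, f i <= g i) -> \sum_i f i = \sum_i g i -> forall i, f i = g i.
Proof.
move=> H E i; apply/eqP; rewrite eqn_leq H /=; rewrite leqNgt; apply/negP=> lt.
by have := sum_lt_helper H lt; rewrite E ltnn.
Qed.

Section Comb.
Variables (T : finType) (e : rel T) (m : nat) (c : 'I_m -> T -> nat) (d : nat).
Hypothesis e_sym : symmetric e.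
Hypothesis hc : forall i, proper_coloring e (c i).
Hypothesis hd : forall v, exists i, (nb_neighbor_colors e (c i) v <= d)%N.

Definition kc i (A : {set T}) := size (undup [seq c i a | a <- enum A]).
Definition rk i A := if kc i A <= d then kc i A else d.+1.
Definition phi (A : {set T}) : {ffun 'I_m -> option {set T}} :=
  [ffun i => if kc i A <= d then Some [set v | c i v \in [seq c i a | a <- enum A]] else None].
Definition hh (p : HomK2_cand T) := (\sum_i rk i p.1 + \sum_i rk i p.2 - 2 * m)%N.

Lemma kc_sub i (A : {set T}) (P : pred T) : {subset A <= P} ->
  kc i A <= size (undup [seq c i a | a <- enum P]).
Proof.
move=> sub; apply: uniq_leq_size; first exact: undup_uniq.
move=> x; rewrite !mem_undup => /mapP [a Ha ->]; apply: map_f.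
rewrite mem_enum in Ha; rewrite mem_enum; exact: (sub _ Ha).
Qed.

Lemma kc_mono i (A B : {set T}) : A \subset B -> kc i A <= kc i B.
Proof. by move=> /fintype.subsetP sub; apply: kc_sub. Qed.

Lemma kc_pos i (A : {set T}) : A != finset.set0 -> 0 < kc i A.
Proof.
case/set0Pn=> a Ha; rewrite /kc.
have : c i a \in undup [seq c i a | a <- enum A] by rewrite mem_undup map_f // mem_enum.
by case: (undup _).
Qed.

Lemma rk_mono i (A B : {set T}) : A \subset B -> rk i A <= rk i B.
Proof.
move=> sub; have := kc_mono i sub; rewrite /rk.
case: ifP; case: ifP => //; lia.
Qed.

Lemma rk_le i A : rk i A <= d.+1.
Proof. rewrite /rk; case: ifP => //; lia. Qed.

Lemma rk_pos i A : A != finset.set0 -> 0 < rk i A.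
Proof. move=> /(kc_pos i); rewrite /rk; case: ifP => //. Qed.

Lemma rk_eq i (A B : {set T}) : A \subset B -> rk i A = rk i B -> phi A i = phi B i.
Proof.
move=> sub; have := kc_mono i sub; rewrite /rk !ffunE.
case: ifP => hA; case: ifP => hB //; try lia.
move=> _ E; congr Some; apply/setP => v; rewrite !inE.
have sub' : {subset undup [seq c i a | a <- enum A] <= undup [seq c i a | a <- enum B]}.
  move=> x; rewrite !mem_undup => /mapP [a Ha ->]; apply: map_f.
  rewrite mem_enum in Ha; rewrite mem_enum; exact: (fintype.subsetP sub _ Ha).
have sz : size (undup [seq c i a | a <- enum B]) <= size (undup [seq c i a | a <- enum A]).
  by move: E; rewrite /kc => ->.
have [_ /(_ (c i v))] := uniq_min_size (undup_uniq _) sub' sz.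
by rewrite !mem_undup.
Qed.

Lemma hom_facts (p : HomK2_cand T) : is_HomK2 e p ->
  [/\ p.1 != finset.set0, p.2 != finset.set0 & forall a b, a \in p.1 -> b \in p.2 -> e a b].
Proof.
case/and4P=> h1 h2 _ /forall_inP H; split=> // a b Ha Hb.
by have /forall_inP := H a Ha; apply.
Qed.

Lemma small_side (p : HomK2_cand T) b : is_HomK2 e p -> b \in p.2 ->
  exists i, kc i p.1 <= d.
Proof.
case/hom_facts=> _ _ H Hb; have [i Hi] := hd b; exists i.
apply: leq_trans Hi; apply: kc_sub => a Ha; rewrite inE e_sym; exact: H.
Qed.

Lemma small_side2 (p : HomK2_cand T) a : is_HomK2 e p -> a \in p.1 ->
  exists i, kc i p.2 <= d.
Proof.
case/hom_facts=> _ _ H Ha; have [i Hi] := hd a; exists i.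
apply: leq_trans Hi; apply: kc_sub => b Hb; rewrite inE; exact: H.
Qed.

Lemma sum_rk_lt (A : {set T}) i0 : kc i0 A <= d -> \sum_i rk i A < m * d.+1.
Proof.
move=> h; have -> : m * d.+1 = \sum_(i < m) d.+1 by rewrite sum_nat_const card_ord.
apply: (sum_lt_helper (i0 := i0)) => [i|]; first exact: rk_le.
by rewrite /rk h; lia.
Qed.

Lemma sum_rk_ge (A : {set T}) : A != finset.set0 -> m <= \sum_i rk i A.
Proof.
move=> hA; have E : \sum_(i < m) 1 = m by rewrite sum_nat_const card_ord muln1.
by rewrite -[X in X <= _]E; apply: leq_sum => i _; apply: rk_pos.
Qed.

Lemma hh_lt p : is_HomK2 e p -> hh p < 2 * m * d.
Proof.
move=> H; have [h1 h2 _] := hom_facts H.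
have [b Hb] := set0Pn _ h2; have [a Ha] := set0Pn _ h1.
have [i Hi] := small_side H Hb; have [j Hj] := small_side2 H Ha.
have := sum_rk_lt Hi; have := sum_rk_lt Hj; have := sum_rk_ge h1.
rewrite /hh; nia.
Qed.

Lemma chain p q : is_HomK2 e p -> is_HomK2 e q -> HomK2_le p q -> hh p = hh q ->
  phi p.1 = phi q.1 /\ phi p.2 = phi q.2.
Proof.
move=> Hp Hq /andP [s1 s2]; have [p1 p2 _] := hom_facts Hp.
have [q1 q2 _] := hom_facts Hq.
have m1 : forall i, rk i p.1 <= rk i q.1 by move=> i; apply: rk_mono.
have m2 : forall i, rk i p.2 <= rk i q.2 by move=> i; apply: rk_mono.
have l1 : \sum_i rk i p.1 <= \sum_i rk i q.1 by apply: leq_sum => i _; exact: m1.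
have l2 : \sum_i rk i p.2 <= \sum_i rk i q.2 by apply: leq_sum => i _; exact: m2.
have := sum_rk_ge p1; have := sum_rk_ge p2.
rewrite /hh => g1 g2 E.
have E1 : \sum_i rk i p.1 = \sum_i rk i q.1 by lia.
have E2 : \sum_i rk i p.2 = \sum_i rk i q.2 by lia.
split; apply/ffunP => i; apply: rk_eq => //.
- exact: sum_eq_helper E1 i.
- exact: sum_eq_helper E2 i.
Qed.

Lemma phi_neq p : is_HomK2 e p -> phi p.1 != phi p.2.
Proof.
move=> H; have [h1 h2 Hab] := hom_facts H.
have [b Hb] := set0Pn _ h2; have [a Ha] := set0Pn _ h1.
have [i Hi] := small_side H Hb.
apply/eqP => /ffunP /(_ i); rewrite !ffunE Hi; case: ifP => // _ [] /setP /(_ a).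
rewrite !inE map_f ?mem_enum // => /esym /mapP [b' Hb' E].
rewrite mem_enum in Hb'.
by move: (hc i (Hab _ _ Ha Hb')); rewrite E eqxx.
Qed.

End Comb.
Local Open Scope ring_scope.

Lemma cont_sum (R : realType) (V : normedModType R) (X : topologicalType) (I : Type) (s : seq I)
  (F : I -> X -> V) x :
  (forall i, {for x, continuous (F i)}) -> {for x, continuous (fun y => \sum_(i <- s) F i y)}.
Proof.
move=> H; elim: s => [|a s IH].
  rewrite (_ : (fun y => _) = fun=> 0); first exact: cst_continuous.
  by apply: funext => y; rewrite big_nil.
rewrite (_ : (fun y => _) = (fun y => F a y + \sum_(i <- s) F i y)).
  exact: (cvgD (H a) IH).
by apply: funext => y; rewrite big_cons.
Qed.

Lemma cont_row (R : realType) (X : topologicalType) n (F : 'I_n -> X -> R) x :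
  (forall j, {for x, continuous (F j)}) ->
  {for x, continuous (fun y => \row_j F j y : 'rV[R]_n)}.
Proof.
move=> H.
rewrite (_ : (fun y => _) = fun y => \sum_(j <- index_enum 'I_n) F j y *: (delta_mx 0 j : 'rV[R]_n)).
  apply: cont_sum => j; exact: continuousZr_tmp.
apply: funext => y; apply/rowP => k; rewrite mxE summxE.
rewrite (bigD1 k) //= big1 ?addr0.
  by rewrite !mxE !eqxx mulr1.
by move=> j /negbTE jk; rewrite !mxE eq_sym jk andbF mulr0.
Qed.

Local Open Scope ring_scope.

Section Ana.
Variables (R : realType) (T : finType) (e : rel T) (m : nat) (c : 'I_m -> T -> nat) (d : nat).
Hypothesis e_sym : symmetric e.
Hypothesis hc : forall i, proper_coloring e (c i).
Hypothesis hd : forall v, exists i, (nb_neighbor_colors e (c i) v <= d)%N.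

Definition nn := (2 * m * d)%N.

Definition sgn (p : HomK2_cand T) : R :=
  if (enum_rank (phi c d p.1) < enum_rank (phi c d p.2))%N then 1
  else if (enum_rank (phi c d p.2) < enum_rank (phi c d p.1))%N then -1 else 0.

Definition gg (x : RHomK2 R T) (j : 'I_nn) : R :=
  \sum_p x p * (sgn p * ((hh c d p == j)%N)%:R).

Definition nrm (x : RHomK2 R T) := Num.sqrt (\sum_j gg x j ^+ 2).

Definition ff (x : RHomK2 R T) : 'rV[R]_nn := \row_j (gg x j / nrm x).

Lemma swapK : cancel (@HomK2_swap T) (@HomK2_swap T).
Proof. by case. Qed.

Lemma sgn_swap p : sgn (HomK2_swap p) = - sgn p.
Proof.
rewrite /sgn /HomK2_swap /=.
case: ltngtP => h /=; by rewrite ?opprK ?oppr0.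
Qed.

Lemma hh_swap p : hh c d (HomK2_swap p) = hh c d p.
Proof. by rewrite /hh /HomK2_swap /= addnC. Qed.

Lemma sgn_hom p : is_HomK2 e p -> sgn p != 0.
Proof.
move=> H; move: (phi_neq e_sym hc hd H) => /eqP NE.
rewrite /sgn; case: ltngtP => h.
- exact: oner_neq0.
- by rewrite oppr_eq0 oner_neq0.
- by exfalso; apply: NE; apply: enum_rank_inj; apply: val_inj.
Qed.

Lemma gg_act x j : gg (HomK2_act x) j = - gg x j.
Proof.
rewrite /gg /HomK2_act (reindex_inj (can_inj swapK)) -sumrN.
by apply: eq_bigr => p _; rewrite swapK sgn_swap hh_swap mulNr mulrN.
Qed.

Lemma nrm_act x : nrm (HomK2_act x) = nrm x.
Proof. by rewrite /nrm; congr Num.sqrt; apply: eq_bigr => j _; rewrite gg_act sqrrN. Qed.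

Lemma gg_nz x : HomK2_realization e x -> exists j, gg x j != 0.
Proof.
case=> x0 [x1 [x2 x3]].
have [p0 hp0] : exists p0, x p0 != 0.
  case: (boolP [exists p, x p != 0]) => [/existsP //|/existsPn H].
  exfalso; move: x1; rewrite big1 => [/esym/eqP|p _]; first by rewrite oner_eq0.
  by apply/eqP; have := H p; rewrite negbK.
have Hp0 := x2 p0 hp0.
have lt := hh_lt e_sym hd Hp0.
exists (Ordinal lt).
have E : gg x (Ordinal lt) = sgn p0 * \sum_p x p * ((hh c d p == hh c d p0)%N)%:R.
  rewrite /gg mulr_sumr; apply: eq_bigr => p _ /=.
  case: (eqVneq (x p) 0) => [->|xp]; first by rewrite !mul0r mulr0.
  case: (eqVneq (hh c d p) (hh c d p0)) => [Eh|NE]; last by rewrite !mulr0.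
  have Hp := x2 p xp.
  have [e1 e2] : phi c d p.1 = phi c d p0.1 /\ phi c d p.2 = phi c d p0.2.
    case/orP: (x3 p p0 xp hp0) => le.
    - exact: chain Hp Hp0 le Eh.
    - by have [-> ->] := chain Hp0 Hp le (esym Eh).
  by rewrite /sgn e1 e2 mulrCA.
rewrite E mulf_neq0 ?sgn_hom //.
rewrite (bigD1 p0) //= eqxx mulr1.
have h1 : 0 < x p0 by rewrite lt0r hp0 x0.
have h2 : 0 <= \sum_(p | p != p0) x p * ((hh c d p == hh c d p0)%N)%:R.
  by apply: sumr_ge0 => p _; apply: mulr_ge0 => //; apply: ler0n.
apply: lt0r_neq0; lra.
Qed.

Lemma S_pos x : HomK2_realization e x -> 0 < \sum_j gg x j ^+ 2.
Proof.
move=> /gg_nz [j hj]; rewrite (bigD1 j) //=.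
have h1 : 0 < gg x j ^+ 2 by rewrite exprn_even_gt0.
have h2 : 0 <= \sum_(i | i != j) gg x i ^+ 2 by apply: sumr_ge0 => i _; apply: sqr_ge0.
lra.
Qed.

Lemma gg_cont j x : {for x, continuous (fun y : RHomK2 R T => gg y j)}.
Proof.
apply: cont_sum => p.
have h1 : {for x, continuous (fun y : RHomK2 R T => y p)} by exact: proj_continuous.
have h2 : {for x, continuous (fun y : RHomK2 R T => sgn p * ((hh c d p == j)%N)%:R)} by exact: cst_continuous.
exact: (continuousM h1 h2).
Qed.

Lemma map_exists : HomK2_Z2map_to R e nn.
Proof.
exists ff; split; [|split].
- apply: continuous_in_subspaceT => x; rewrite inE => Ax.
  apply: cont_row => j.
  have Sx := S_pos Ax.
  have Sc : {for x, continuous (fun y : RHomK2 R T => \sum_j gg y j ^+ 2)}.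
    apply: cont_sum => k.
    have h := continuousM (gg_cont (j:=k) (x:=x)) (gg_cont (j:=k) (x:=x)).
    rewrite (_ : (fun y => gg y k ^+ 2) = (fun y => gg y k * gg y k)); first exact: h.
    by apply: funext => y; rewrite expr2.
  have Nc : {for x, continuous nrm}.
    exact: (continuous_comp Sc (@sqrt_continuous R _)).
  have Nx : nrm x != 0 by rewrite /nrm; apply: lt0r_neq0; rewrite sqrtr_gt0.
  exact: (@continuousM _ _ (fun y : RHomK2 R T => gg y j) (fun y => (nrm y)^-1) x
      (gg_cont (j:=j) (x:=x)) (continuousV Nx Nc)).
- move=> x Ax; rewrite /unit_sphere /=.
  under eq_bigr do rewrite mxE expr_div_n.
  rewrite -mulr_suml /nrm sqr_sqrtr; last exact: ltW (S_pos Ax).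
  by rewrite divff // lt0r_neq0 // S_pos.
- move=> x Ax; apply/rowP => j; rewrite !mxE gg_act nrm_act.
  by rewrite mulNr.
Qed.

End Ana.

Lemma ind_le (R : realType) (T : finType) (e : rel T) n :
  HomK2_Z2map_to R e n -> Z2index_HomK2 R e <= n%:Z - 1.
Proof.
move=> h; rewrite /Z2index_HomK2; case: pselect => [ex|nex]; last first.
  by exfalso; apply: nex; exists n.
case: ex_minnP => k _ /(_ n (asboolT h)) le.
by rewrite lerD2r lez_nat.
Qed.

Theorem corollary1p2 (R : realType) (T : finType) (e : rel T) (m : nat)
    (c : 'I_m -> T -> nat) :
  simple_graph e -> (0 < #|T|)%N -> (0 < m)%N ->
  (forall i, proper_coloring e (c i)) ->
  exists v : T, forall i : 'I_m,
    (@Z2index_HomK2 R T e %/ (2 * m)%:Z)%Z + 1 <= (nb_neighbor_colors e (c i) v)%:Z.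
Proof.
move=> [e_sym _] T0 m0 hc.
set q := (Z2index_HomK2 R e %/ (2 * m)%:Z)%Z.
case: (boolP [exists v, [forall i, q + 1 <= (nb_neighbor_colors e (c i) v)%:Z]]).
  by move=> /existsP [v /forallP H]; exists v.
move=> /existsPn H; exfalso.
have /card_gt0P [v0 _] := T0.
case: (ltP q 0) => hq.
  have /forallPn [i Hi] := H v0.
  by move: Hi; rewrite -ltNge; lia.
pose d := `|q|%N.
have qd : q = d%:Z by rewrite /d gez0_abs.
have hd : forall v, exists i, (nb_neighbor_colors e (c i) v <= d)%N.
  move=> v; have /forallPn [i Hi] := H v; exists i.
  by move: Hi; rewrite -ltNge qd -lez_nat; lia.
have Hle := ind_le (map_exists R e_sym hc hd).
have Hfl : q * (2 * m)%:Z <= Z2index_HomK2 R e.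
  by apply: lez_floor; lia.
move: Hle Hfl; rewrite qd /nn.
rewrite -PoszM => A B.
have : ((d * (2 * m))%N%:Z <= (2 * m * d)%N%:Z - 1) by apply: le_trans A.
rewrite mulnC; lia.
Qed.
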